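(* Let $M_n$ be the Motzkin numbers, defined by $M_0=M_1=1$ and $(n+2)M_n=(2n+1)M_{n-1}+(3n-3)M_{n-2}$ for $n\ge 2$. Then $\{M_n\}_{n\ge0}$ is asymptotically $r$-log-convex for every positive integer $r$.
   Context: $\mathscr{L}a_n=a_na_{n+2}-a_{n+1}^2$, $\mathscr{L}^k a_n=\mathscr{L}(\mathscr{L}^{k-1}a_n)$. A sequence is asymptotically $r$-log-convex if there is $N$ such that $\mathscr{L}^k a_n\ge0$ for all $k=1,\dots,r$ and all $n\ge N$. *)

(* Defs.v *)
From mathcomp Require Import all_boot all_order all_algebra.
Set Implicit Arguments. Unset Strict Implicit. Unset Printing Implicit Defensive.
Import Order.TTheory GRing.Theory Num.Theory.
Local Open Scope ring_scope.

Fixpoint motzkin_aux (n : nat) : rat * rat :=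
  (* returns (M_n, M_{n+1}) *)
  match n with
  | 0%N => (1, 1)
  | k.+1 =>
      let: (a, b) := motzkin_aux k in
      (* a = M_k, b = M_{k+1}; compute M_{k+2} with m = k+2 *)
      (b, (((2 * k.+2 + 1)%N%:R * b + (3 * k.+2 - 3)%N%:R * a) / (k.+2 + 2)%N%:R))
  end.

Definition motzkin (n : nat) : rat := (motzkin_aux n).1.

Definition Lop (a : nat -> rat) : nat -> rat :=
  fun n => a n * a n.+2 - a n.+1 ^+ 2.

Definition Liter (k : nat) (a : nat -> rat) : nat -> rat := iter k Lop a.

Definition asympt_r_log_convex (r : nat) (a : nat -> rat) : Prop :=
  exists N : nat, forall k n : nat, (1 <= k <= r)%N -> (N <= n)%N ->
    0 <= Liter k a n.

Lemma motzkin0 : motzkin 0 = 1. Proof. by []. Qed.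
Lemma motzkin1 : motzkin 1 = 1. Proof. by []. Qed.
Lemma motzkin_rec (n : nat) : (2 <= n)%N ->
  n.+2%:R * motzkin n = (2 * n + 1)%N%:R * motzkin n.-1 + (3 * n - 3)%N%:R * motzkin n.-2.
Proof.
case: n => [|[|k]] // _.
rewrite /motzkin /= -/(motzkin_aux k).
case: (motzkin_aux k) => a b /=.
have H : (k.+2 + 2)%N%:R != 0 :> rat by rewrite pnatr_eq0 addn2.
rewrite addn2 in H *.
by rewrite mulrC -mulrA mulVf ?mulr1.
Qed.
Lemma motzkin_values : [seq motzkin i | i <- iota 0 8] = [:: 1; 1; 2; 4; 9; 21; 51; 127].
Proof. by vm_compute. Qed.

(* Main.v *)
Require Import Defs.
From mathcomp Require Import all_boot all_order all_algebra.
From mathcomp Require Import lra zify ring.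
Set Implicit Arguments. Unset Strict Implicit. Unset Printing Implicit Defensive.
Import Order.TTheory GRing.Theory Num.Theory.
Local Open Scope ring_scope.

Definition xn (n : nat) : rat := (n%:R)^-1.

Lemma xn_gt0 n : (0 < n)%N -> 0 < xn n.
Proof. by move=> h; rewrite /xn invr_gt0 ltr0n. Qed.
Lemma xn_ge0 n : 0 <= xn n.
Proof. by rewrite /xn invr_ge0 ler0n. Qed.
Lemma xn_le1 n : (0 < n)%N -> xn n <= 1.
Proof. by move=> h; rewrite /xn invr_le1 ?ler1n ?unitfE ?pnatr_eq0 -?lt0n ?ltr0n. Qed.
Lemma xnS n : (0 < n)%N -> xn n.+1 <= xn n.
Proof.
move=> h; rewrite /xn lef_pV2 ?posrE ?ltr0n // ler_nat //.
Qed.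
Lemma xn_mul n : (0 < n)%N -> n%:R * xn n = 1.
Proof. by move=> h; rewrite /xn mulfV // pnatr_eq0 -lt0n. Qed.
Lemma xn_pow_le n k m : (0 < n)%N -> (k <= m)%N -> xn n ^+ m <= xn n ^+ k.
Proof. move=> h hk; apply: ler_wiXn2l => //; [exact: xn_ge0 | exact: xn_le1]. Qed.
Lemma xn_pow_le1 n k : (0 < n)%N -> xn n ^+ k <= 1.
Proof. by move=> h; apply: exprn_ile1; [exact: xn_ge0 | exact: xn_le1]. Qed.
Lemma xn_powS n k : (0 < n)%N -> xn n.+1 ^+ k <= xn n ^+ k.
Proof. by move=> h; apply: lerXn2r; rewrite ?nnegrE ?xn_ge0 ?xnS. Qed.

Lemma xn_small (S e : rat) : 0 < e -> exists N, (0 < N)%N /\ forall n, (N <= n)%N -> S * xn n <= e.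
Proof.
move=> he.
have h0 : 0 <= `|S| / e by apply: divr_ge0 => //; exact: ltW.
move: (Num.Def.archi_bound _) (archi_boundP h0) => M hM.
exists M.+1; split => // n hn.
have hn0 : (0 < n)%N by lia.
have hx := xn_gt0 hn0.
have hnx := xn_mul hn0.
have hMn : M%:R <= n%:R :> rat by rewrite ler_nat; lia.
rewrite ltr_pdivrMr // in hM.
have hS : S <= `|S| by exact: ler_norm.
have : S * xn n <= `|S| * xn n by rewrite ler_pM2r.
have : `|S| * xn n <= (M%:R * e) * xn n by rewrite ler_pM2r //; apply: ltW.
have : (M%:R * e) * xn n <= (n%:R * e) * xn n by rewrite ler_pM2r // ler_pM2r.
have -> : n%:R * e * xn n = e by rewrite mulrAC hnx mul1r.
lra.
Qed.

Lemma poly_bound (P : {poly rat}) : exists B, 0 <= B /\ forall x, `|x| <= 1 -> `|P.[x]| <= B.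
Proof.
elim/poly_ind: P => [|Q c [B [hB IH]]].
  by exists 0; split => // x _; rewrite horner0 normr0.
exists (B + `|c|); split; first by rewrite addr_ge0.
move=> x hx; rewrite hornerMXaddC.
apply: le_trans (ler_normD _ _) _; rewrite normrM lerD2r.
have h1 := IH x hx.
have h2 : 0 <= `|Q.[x]| by [].
have h3 : 0 <= `|x| by [].
nra.
Qed.

Lemma poly_coef0 (Q : {poly rat}) c : (Q * 'X + c%:P)`_0 = c.
Proof. by rewrite coefD coefMX coefC add0r. Qed.
Lemma poly_coef1 (Q : {poly rat}) c : (Q * 'X + c%:P)`_1 = Q`_0.
Proof. by rewrite coefD coefMX coefC /= addr0. Qed.

Lemma poly_near0 (P : {poly rat}) : exists S, 0 <= S /\ forall x, `|x| <= 1 -> `|P.[x] - P`_0| <= S * `|x|.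
Proof.
elim/poly_ind: P => [|Q c _].
  by exists 0; split => // x _; rewrite horner0 coef0 subr0 normr0 mul0r.
have [B [hB hQ]] := poly_bound Q.
exists B; split => // x hx.
rewrite hornerMXaddC poly_coef0 addrK normrM.
apply: ler_wpM2r => //; exact: hQ.
Qed.

Definition Exp (K : nat) (u : nat -> rat) (c0 c1 : rat) :=
  exists P : {poly rat}, P`_0 = c0 /\ P`_1 = c1 /\
    exists C N, 0 <= C /\ (0 < N)%N /\
      forall n, (N <= n)%N -> `|u n - P.[xn n]| <= C * xn n ^+ K.+1.

Lemma Exp_pert K u v a0 a1 : Exp K v a0 a1 ->
  (exists C N, 0 <= C /\ forall n, (N <= n)%N -> `|u n - v n| <= C * xn n ^+ K.+1) ->
  Exp K u a0 a1.
Proof.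
move=> [P [h0 [h1 [C [N [hC [hN H]]]]]]] [C' [N' [hC' H']]].
exists P; split => //; split => //.
exists (C + C'), (maxn N N'); split; first by rewrite addr_ge0.
split; first by lia.
move=> n hn.
have := H n (leq_trans (leq_maxl _ _) hn).
have := H' n (leq_trans (leq_maxr _ _) hn).
have := ler_normD (u n - v n) (v n - P.[xn n]).
rewrite addrA subrK.
lra.
Qed.

Lemma Exp_eq K u v a0 a1 : Exp K v a0 a1 ->
  (exists N, forall n, (N <= n)%N -> u n = v n) -> Exp K u a0 a1.
Proof.
move=> H [N HN]; apply: Exp_pert H _.
exists 0, N; split => // n hn; by rewrite HN // subrr normr0 mul0r.
Qed.

Lemma Exp_mono K K' u a0 a1 : (K' <= K)%N -> Exp K u a0 a1 -> Exp K' u a0 a1.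
Proof.
move=> hK [P [h0 [h1 [C [N [hC [hN H]]]]]]].
exists P; split => //; split => //; exists C, N; split => //; split => // n hn.
apply: le_trans (H n hn) _; apply: ler_wpM2l => //.
apply: xn_pow_le; lia.
Qed.

Lemma Exp_const K c : Exp K (fun _ => c) c 0.
Proof.
exists c%:P; rewrite !coefC /=; split => //; split => //.
exists 0, 1%N; split => //; split => // n _.
by rewrite hornerC subrr normr0 mul0r.
Qed.

Lemma Exp_x K : Exp K xn 0 1.
Proof.
exists 'X; rewrite !coefX /=; split => //; split => //.
exists 0, 1%N; split => //; split => // n _.
by rewrite hornerX subrr normr0 mul0r.
Qed.

Lemma Exp_add K u v a0 a1 b0 b1 : Exp K u a0 a1 -> Exp K v b0 b1 ->
  Exp K (fun n => u n + v n) (a0 + b0) (a1 + b1).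
Proof.
move=> [P [h0 [h1 [C [N [hC [hN H]]]]]]] [Q [g0 [g1 [D [M [hD [hM G]]]]]]].
exists (P + Q); rewrite !coefD h0 h1 g0 g1; split => //; split => //.
exists (C + D), (maxn N M); split; first by rewrite addr_ge0.
split; first by lia.
move=> n hn.
have := H n (leq_trans (leq_maxl _ _) hn).
have := G n (leq_trans (leq_maxr _ _) hn).
have := ler_normD (u n - P.[xn n]) (v n - Q.[xn n]).
rewrite hornerD.
have -> : u n + v n - (P.[xn n] + Q.[xn n]) = u n - P.[xn n] + (v n - Q.[xn n]) by ring.
lra.
Qed.

Lemma Exp_mul K u v a0 a1 b0 b1 : Exp K u a0 a1 -> Exp K v b0 b1 ->
  Exp K (fun n => u n * v n) (a0 * b0) (a0 * b1 + a1 * b0).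
Proof.
move=> [P [h0 [h1 [C [N [hC [hN H]]]]]]] [Q [g0 [g1 [D [M [hD [hM G]]]]]]].
exists (P * Q); split; first by rewrite coef0M h0 g0.
split; first by rewrite coefM !big_ord_recr big_ord0 /= add0r h0 h1 g0 g1 addrC.
have [BP [hBP HP]] := poly_bound P.
have [BQ [hBQ HQ]] := poly_bound Q.
exists (C * (BQ + D) + BP * D), (maxn N M); split.
  by rewrite addr_ge0 // mulr_ge0 // addr_ge0.
split; first by lia.
move=> n hn.
have hn0 : (0 < n)%N by lia.
have hx : `|xn n| <= 1 by rewrite ger0_norm ?xn_ge0 ?xn_le1.
have h1' := H n (leq_trans (leq_maxl _ _) hn).
have h2' := G n (leq_trans (leq_maxr _ _) hn).
have hp := HP _ hx.
have hq := HQ _ hx.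
have hxk := xn_pow_le1 K.+1 hn0.
have hxk0 : 0 <= xn n ^+ K.+1 by rewrite exprn_ge0 // xn_ge0.
set e1 := u n - P.[xn n] in h1'.
set e2 := v n - Q.[xn n] in h2'.
have -> : u n * v n - (P * Q).[xn n] = e1 * (Q.[xn n] + e2) + P.[xn n] * e2.
  by rewrite hornerM /e1 /e2; ring.
apply: le_trans (ler_normD _ _) _.
rewrite !normrM.
have he2 : `|Q.[xn n] + e2| <= BQ + D.
  apply: le_trans (ler_normD _ _) _.
  have : D * xn n ^+ K.+1 <= D by rewrite ler_piMr.
  lra.
have ha : `|e1| * `|Q.[xn n] + e2| <= C * xn n ^+ K.+1 * (BQ + D).
  by apply: ler_pM.
have hb : `|P.[xn n]| * `|e2| <= BP * (D * xn n ^+ K.+1).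
  by apply: ler_pM.
have -> : (C * (BQ + D) + BP * D) * xn n ^+ K.+1 = C * xn n ^+ K.+1 * (BQ + D) + BP * (D * xn n ^+ K.+1) by ring.
lra.
Qed.

Lemma Exp_coef K u a0 a1 b0 b1 : Exp K u a0 a1 -> a0 = b0 -> a1 = b1 -> Exp K u b0 b1.
Proof. by move=> H <- <-. Qed.

Lemma Exp_near0 K u c0 c1 : Exp K u c0 c1 ->
  exists S N, 0 <= S /\ (0 < N)%N /\ forall n, (N <= n)%N -> `|u n - c0| <= S * xn n.
Proof.
move=> [P [h0 [h1 [C [N [hC [hN H]]]]]]].
have [S [hS HS]] := poly_near0 P.
exists (C + S), N; split; first by rewrite addr_ge0.
split => // n hn.
have hn0 : (0 < n)%N by lia.
have hx : `|xn n| <= 1 by rewrite ger0_norm ?xn_ge0 ?xn_le1.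
have := HS _ hx; rewrite h0 (ger0_norm (xn_ge0 n)) => h2.
have h3 := H n hn.
have : xn n ^+ K.+1 <= xn n by rewrite -[X in _ <= X]expr1; apply: xn_pow_le.
move=> h4.
have h5 : C * xn n ^+ K.+1 <= C * xn n by rewrite ler_wpM2l.
have := ler_normD (u n - P.[xn n]) (P.[xn n] - c0).
rewrite addrA subrK.
lra.
Qed.

Lemma Exp_close K u c0 c1 e : Exp K u c0 c1 -> 0 < e ->
  exists N, (0 < N)%N /\ forall n, (N <= n)%N -> `|u n - c0| <= e.
Proof.
move=> H he.
have [S [N [hS [hN HS]]]] := Exp_near0 H.
have [M [hM HM]] := xn_small S he.
exists (maxn N M); split; first by lia.
move=> n hn.
apply: le_trans (HS n (leq_trans (leq_maxl _ _) hn)) _.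
exact: HM (leq_trans (leq_maxr _ _) hn).
Qed.

Lemma Exp_poly K v b1 (Q : {poly rat}) : Exp K v 0 b1 ->
  Exp K (fun n => Q.[v n]) Q`_0 (Q`_1 * b1).
Proof.
move=> Hv.
elim/poly_ind: Q => [|Q c IH].
  apply: Exp_eq (Exp_coef (Exp_const K 0) _ _) _.
  - by rewrite coef0.
  - by rewrite coef0 mul0r.
  by exists 0%N => n _; rewrite horner0.
have := Exp_add (Exp_mul IH Hv) (Exp_const K c).
move/Exp_coef => H.
apply: Exp_eq (H _ _ _ _) _.
- by rewrite poly_coef0 mulr0 add0r.
- by rewrite poly_coef1 mulr0 !addr0.
by exists 0%N => n _; rewrite hornerMXaddC.
Qed.

Lemma geom_id (t : rat) m : (1 + t) * \sum_(j < m) (-1) ^+ j * t ^+ j = 1 - (-1) ^+ m * t ^+ m.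
Proof.
elim: m => [|m IH]; first by rewrite big_ord0 mulr0 !expr0 mulr1 subrr.
by rewrite big_ord_recr /= mulrDr IH !exprS; ring.
Qed.

Definition Gp (m : nat) : {poly rat} := \sum_(j < m.+2) (-1) ^+ j *: 'X^j.

Lemma Gp_horner m t : (Gp m).[t] = \sum_(j < m.+2) (-1) ^+ j * t ^+ j.
Proof. by rewrite /Gp horner_sum; apply: eq_bigr => j _; rewrite hornerZ hornerXn. Qed.

Lemma Gp_coef0 m : (Gp m)`_0 = 1.
Proof.
rewrite /Gp coef_sum big_ord_recl /= coefZ coefXn /= mulr1 big1 ?addr0 // => j _.
by rewrite coefZ coefXn /= mulr0.
Qed.

Lemma Gp_coef1 m : (Gp m)`_1 = -1.
Proof.
rewrite /Gp coef_sum big_ord_recl /= coefZ coefXn /= mulr0 add0r.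
rewrite big_ord_recl /= coefZ coefXn /= mulr1 expr1 big1 ?addr0 // => j _.
by rewrite coefZ coefXn /= mulr0.
Qed.

Lemma Exp_inv K u a0 a1 : Exp K u a0 a1 -> a0 != 0 ->
  Exp K (fun n => (u n)^-1) a0^-1 (- (a1 / a0 ^+ 2)).
Proof.
move=> Hu ha0.
have Ht : Exp K (fun n => u n * a0^-1 + -1) 0 (a1 / a0).
  apply: Exp_coef (Exp_add (Exp_mul Hu (Exp_const K a0^-1)) (Exp_const K (-1))) _ _.
  - by rewrite mulfV // subrr.
  - by rewrite mulr0 add0r addr0.
set t := fun n => _ in Ht.
have [D [N1 [hD [hN1 HD]]]] := Exp_near0 Ht.
have he : (0:rat) < 2^-1 by rewrite invr_gt0.
have [N2 [hN2 H2]] := Exp_close Ht he.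
have Hg := Exp_poly (Gp K) Ht.
have Hm := Exp_mul (Exp_const K a0^-1) Hg.
apply: Exp_pert (Exp_coef Hm _ _) _.
- by rewrite Gp_coef0 mulr1.
- rewrite Gp_coef1 mul0r addr0; field; exact: ha0.
exists (`|a0^-1| * D ^+ K.+2 * 2), (maxn N1 N2); split.
  by rewrite mulr_ge0 // mulr_ge0 // exprn_ge0.
move=> n hn.
have hn0 : (0 < n)%N by lia.
have h1 := HD n (leq_trans (leq_maxl _ _) hn); rewrite subr0 in h1.
have h2 := H2 n (leq_trans (leq_maxr _ _) hn); rewrite subr0 in h2.
have e1 : u n = a0 * (1 + t n) by rewrite /t; field.
have hb : 2^-1 <= `|1 + t n|.
  have := ler_normD 1 (t n); have := ler_normB (1 + t n) (t n).
  rewrite addrK normr1; lra.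
have ne : 1 + t n != 0.
  apply/negP => /eqP h; rewrite h normr0 in hb; lra.
rewrite Gp_horner.
have g := geom_id (t n) K.+2.
set G := \sum_(j < _) _ in g *.
have hG : G = (1 - (-1) ^+ K.+2 * t n ^+ K.+2) / (1 + t n).
  by rewrite -g; field.
have -> : (u n)^-1 - a0^-1 * G = a0^-1 * ((-1) ^+ K.+2 * t n ^+ K.+2 / (1 + t n)).
  rewrite hG e1; field; apply/andP; split => //.
rewrite normrM [X in _ * X]normrM normfV [X in _ * (X * _)]normrM normrX normrX normrN1 expr1n mul1r.
have hx0 := xn_ge0 n.
have h3 : `|t n| ^+ K.+2 <= (D * xn n) ^+ K.+2.
  by apply: lerXn2r => //; rewrite nnegrE // mulr_ge0.
rewrite exprMn in h3.
have h4 : xn n ^+ K.+2 <= xn n ^+ K.+1 by apply: xn_pow_le.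
have h5 : `|1 + t n|^-1 <= 2.
  rewrite -[2]invrK lef_pV2 ?posrE //; last by apply: lt_le_trans hb.
have h6 : 0 <= `|t n| ^+ K.+2 by rewrite exprn_ge0.
have h7 : 0 <= D ^+ K.+2 by rewrite exprn_ge0.
have h8 : 0 <= `|a0^-1| by [].
have h9 : `|t n| ^+ K.+2 / `|1 + t n| <= D ^+ K.+2 * xn n ^+ K.+1 * 2.
  apply: ler_pM => //; first by rewrite invr_ge0.
  apply: le_trans h3 _; apply: ler_wpM2l => //.
rewrite normfV.
have -> : `|a0|^-1 * D ^+ K.+2 * 2 * xn n ^+ K.+1 = `|a0|^-1 * (D ^+ K.+2 * xn n ^+ K.+1 * 2) by ring.
apply: ler_wpM2l; first by rewrite invr_ge0.
exact: h9.
Qed.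

Lemma xnS_eq n : (0 < n)%N -> xn n.+1 = xn n * (1 + xn n)^-1.
Proof.
move=> h; rewrite /xn -natr1.
have hn : n%:R != 0 :> rat by rewrite pnatr_eq0 -lt0n.
have hn1 : n%:R + 1 != 0 :> rat by rewrite natr1 pnatr_eq0.
by field; apply/andP; split => //.
Qed.

Lemma Exp_y K : Exp K (fun n => xn n.+1) 0 1.
Proof.
have h1 : (1 : rat) + 0 != 0 by rewrite addr0 oner_eq0.
have H := Exp_mul (Exp_x K) (Exp_inv (Exp_add (Exp_const K 1) (Exp_x K)) h1).
apply: Exp_eq (Exp_coef H _ _) _.
- by rewrite mul0r.
- by rewrite mul0r add0r addr0 invr1 mulr1.
by exists 1%N => n hn; rewrite xnS_eq.
Qed.

Lemma Exp_shift K u a0 a1 : Exp K u a0 a1 -> Exp K (fun n => u n.+1) a0 a1.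
Proof.
move=> Hu; have Hu' := Hu.
move: Hu' => [P [h0 [h1 [C [N [hC [hN H]]]]]]].
have HP := Exp_poly P (Exp_y K).
rewrite mulr1 h0 h1 in HP.
apply: Exp_pert HP _.
exists C, N; split => // n hn.
have hn0 : (0 < n)%N by lia.
apply: le_trans (H n.+1 (leq_trans hn (leqnSn _))) _.
apply: ler_wpM2l => //; exact: xn_powS.
Qed.

Definition Dseq (P : {poly rat}) n := n%:R ^+ 2 * (P.[xn n.+1] - P.[xn n]).

Lemma Exp_Dpoly K P : exists d1, Exp K (Dseq P) (- P`_1) d1.
Proof.
elim/poly_ind: P => [|Q c [d IH]].
  exists 0; apply: Exp_eq (Exp_coef (Exp_const K 0) _ _) _ => //.
    by rewrite coef0 oppr0.
  by exists 0%N => n _; rewrite /Dseq !horner0 subrr mulr0.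
have H := Exp_add (Exp_mul IH (Exp_y K))
  (Exp_mul (Exp_poly Q (Exp_x K)) (Exp_add (Exp_y K) (Exp_const K (-1)))).
eexists; apply: Exp_eq (Exp_coef H _ erefl) _.
  by rewrite poly_coef1 mulr0 add0r add0r mulrN1.
exists 1%N => n hn.
have hn0 : n%:R != 0 :> rat by rewrite pnatr_eq0 -lt0n.
rewrite /Dseq !hornerMXaddC xnS_eq // /xn.
have hn1 : n%:R + 1 != 0 :> rat.
  by rewrite natr1 pnatr_eq0.
by field; apply/andP; split => //.
Qed.

Lemma Exp_Delta K u a0 a1 : Exp K.+2 u a0 a1 ->
  exists d1, Exp K (fun n => n%:R ^+ 2 * (u n.+1 - u n)) (- a1) d1.
Proof.
move=> [P [h0 [h1 [C [N [hC [hN H]]]]]]].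
have [d1 HD] := Exp_Dpoly K P.
exists d1; rewrite -h1; apply: Exp_pert HD _.
exists (2 * C), N; split; first by rewrite mulr_ge0.
move=> n hn.
have hn0 : (0 < n)%N by lia.
have e1 := H n hn.
have e2 := H n.+1 (leq_trans hn (leqnSn _)).
have e3 : xn n.+1 ^+ K.+3 <= xn n ^+ K.+3 by exact: xn_powS.
rewrite /Dseq.
have -> : n%:R ^+ 2 * (u n.+1 - u n) - n%:R ^+ 2 * (P.[xn n.+1] - P.[xn n]) =
   n%:R ^+ 2 * ((u n.+1 - P.[xn n.+1]) - (u n - P.[xn n])) by ring.
rewrite normrM ger0_norm ?exprn_ge0 ?ler0n //.
have hnx := xn_mul hn0.
have -> : 2 * C * xn n ^+ K.+1 = n%:R ^+ 2 * (2 * C * xn n ^+ K.+3).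
  have hn2 : n%:R ^+ 2 * xn n ^+ 2 = 1 by rewrite -exprMn hnx expr1n.
  have -> : xn n ^+ K.+3 = xn n ^+ K.+1 * xn n ^+ 2 by rewrite -exprD addn2.
  symmetry; transitivity (2 * C * xn n ^+ K.+1 * (n%:R ^+ 2 * xn n ^+ 2)).
    by ring.
  by rewrite hn2 mulr1.
apply: ler_wpM2l; first by rewrite exprn_ge0 ?ler0n.
apply: le_trans (ler_normB _ _) _.
have : C * xn n.+1 ^+ K.+3 <= C * xn n ^+ K.+3 by apply: ler_wpM2l.
lra.
Qed.


Definition Iinv K (a : nat -> rat) := exists c0 c1, 0 < c0 /\ c1 < 0 /\
  (exists N, forall n, (N <= n)%N -> 0 < a n) /\ Exp K (fun n => a n.+1 / a n) c0 c1.

Lemma Iinv_pos K a : Iinv K a -> exists N, forall n, (N <= n)%N -> 0 < a n.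
Proof. by move=> [c0 [c1 [_ [_ [H _]]]]]. Qed.

Lemma Lstep K a : Iinv K.+2 a -> Iinv K (Lop a).
Proof.
move=> [c0 [c1 [hc0 [hc1 [[N0 Hpos] Hq]]]]].
set q := fun n => a n.+1 / a n in Hq.
have [d1 Hw] := Exp_Delta Hq.
set w := fun n => _ in Hw.
have Hq' : Exp K q c0 c1 by apply: Exp_mono Hq; lia.
have he : 0 < - c1 / 2 by rewrite divr_gt0 // oppr_gt0.
have [N1 [hN1 HN1]] := Exp_close Hw he.
have wpos : forall n, (N1 <= n)%N -> 0 < w n.
  move=> n hn; have h := HN1 n hn; rewrite distrC in h.
  have := ler_norm (- c1 - w n); lra.
have key : forall n, (maxn N0 N1 <= n)%N ->
   [/\ a n != 0, a n.+1 != 0, a n.+2 != 0, (n%:R : rat) != 0 &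
       Lop a n = a n * a n.+1 * w n / n%:R ^+ 2].
  move=> n hn.
  have ha0 : a n != 0 by rewrite gt_eqF //; apply: Hpos; lia.
  have ha1 : a n.+1 != 0 by rewrite gt_eqF //; apply: Hpos; lia.
  have ha2 : a n.+2 != 0 by rewrite gt_eqF //; apply: Hpos; lia.
  have hn0 : (n%:R : rat) != 0 by rewrite pnatr_eq0 -lt0n; lia.
  split => //.
  by rewrite /Lop /w /q; field; rewrite ha0 ha1 hn0.
have Lpos : forall n, (maxn N0 N1 <= n)%N -> 0 < Lop a n.
  move=> n hn; have [ha0 ha1 ha2 hn0 ->] := key n hn.
  have hnn : (0 < n)%N by lia.
  apply: divr_gt0; last by rewrite exprn_gt0 // ltr0n.
  apply: mulr_gt0; first apply: mulr_gt0.
  - by apply: Hpos; lia.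
  - by apply: Hpos; lia.
  - by apply: wpos; lia.
have hc1' : - c1 != 0 by rewrite oppr_eq0 lt_eqF.
have Y := Exp_add (Exp_const K 1) (Exp_mul (Exp_const K (-1)) (Exp_y K)).
have E := Exp_mul (Exp_mul (Exp_mul (Exp_mul Hq' (Exp_shift Hq')) (Exp_shift Hw))
             (Exp_inv Hw hc1')) (Exp_mul Y Y).
exists (c0 ^+ 2), (2 * c0 * c1 - 2 * c0 ^+ 2).
split; first by rewrite exprn_gt0.
split; first by nra.
split; first by exists (maxn N0 N1) => n hn; apply: Lpos.
apply: Exp_eq (Exp_coef E _ _) _.
- by field; rewrite ?oppr_eq0 ?lt_eqF.
- by field; rewrite ?oppr_eq0 ?lt_eqF.
exists (maxn N0 N1).+1 => n hn.
have hn' : (maxn N0 N1 <= n)%N by lia.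
have [ha0 ha1 ha2 hn0 e0] := key n hn'.
have [_ _ ha3 hn1 e1] := key n.+1 (leq_trans hn' (leqnSn _)).
have hw0 : w n != 0 by apply: lt0r_neq0; apply: wpos; clear -hn; lia.
have hw1 : w n.+1 != 0 by apply: lt0r_neq0; apply: wpos; clear -hn; lia.
rewrite e0 e1 /q /xn.
have -> : (n.+1%:R : rat) = n%:R + 1 by rewrite -natr1.
rewrite -natr1 in hn1.
by field; rewrite ?ha0 ?ha1 ?ha2 ?ha3 ?hn0 ?hn1 ?hw0 ?hw1.
Qed.

Lemma many k : forall K a, (2 * k <= K)%N -> Iinv K a ->
  exists N, forall j n, (j <= k)%N -> (N <= n)%N -> 0 < Liter j a n.
Proof.
elim: k => [|k IH] K a hK Ha.
  have [N HN] := Iinv_pos Ha.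
  by exists N => j n; rewrite leqn0 => /eqP -> hn; apply: HN.
case: K hK Ha => [|[|K]] hK Ha; try by lia.
have [N0 H0] := Iinv_pos Ha.
have [N1 H1] := IH K (Lop a) ltac:(lia) (Lstep Ha).
exists (maxn N0 N1) => [[|j]] n hj hn.
  by apply: H0; lia.
rewrite /Liter iterSr; apply: H1; lia.
Qed.



Lemma motz_pos n : 0 < motzkin n.
Proof.
suff : 0 < motzkin n /\ 0 < motzkin n.+1 by case.
elim: n => [|n [h0 h1]]; first by rewrite motzkin0 motzkin1.
split => //.
have := motzkin_rec (n := n.+2) isT; rewrite /= => e.
have hn : 0 < (n.+4)%:R :> rat by rewrite ltr0n.
have : 0 < (n.+4)%:R * motzkin n.+2.
  by rewrite e addr_gt0 // mulr_gt0 // ltr0n; lia.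
by rewrite pmulr_rgt0.
Qed.

Definition q n := motzkin n.+1 / motzkin n.

Definition f n (t : rat) := (2 * n%:R + 5 + (3 * n%:R + 3) / t) / (n%:R + 4).

Lemma q_pos n : 0 < q n.
Proof. by rewrite /q divr_gt0 // motz_pos. Qed.

Lemma q_rec n : q n.+1 = f n (q n).
Proof.
have := motzkin_rec (n := n.+2) isT; rewrite /= => e.
have h1 : (2 * n.+2 + 1)%N%:R = 2 * n%:R + 5 :> rat.
  rewrite (_ : (2 * n.+2 + 1 = 2 * n + 5)%N); last by lia.
  by rewrite natrD natrM.
have h2 : (3 * n.+2 - 3)%N%:R = 3 * n%:R + 3 :> rat.
  rewrite (_ : (3 * n.+2 - 3 = 3 * n + 3)%N); last by lia.
  by rewrite natrD natrM.
have h3 : (n.+4)%:R = n%:R + 4 :> rat.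
  rewrite (_ : (n.+4 = n + 4)%N); last by lia.
  by rewrite natrD.
rewrite h1 h2 h3 in e.
have m0 := motz_pos n; have m1 := motz_pos n.+1; have m2 := motz_pos n.+2.
have h4 : n%:R + 4 != 0 :> rat by rewrite -h3 pnatr_eq0.
rewrite /f /q.
have -> : motzkin n.+2 = ((2 * n%:R + 5) * motzkin n.+1 + (3 * n%:R + 3) * motzkin n) / (n%:R + 4).
  by rewrite -e; field; rewrite h4.
field.
by rewrite h4 !gt_eqF.
Qed.

Lemma fdiff n s p : 19/10 <= s -> 29/10 <= p -> `|f n s - f n p| <= 2/3 * `|s - p|.
Proof.
move=> hs hp.
have hn4 : 0 < n%:R + 4 :> rat by have := ler0n rat n; lra.
have hs0 : s != 0 by apply: lt0r_neq0; lra.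
have hp0 : p != 0 by apply: lt0r_neq0; lra.
pose A : rat := (3 * n%:R + 3) / (n%:R + 4).
have hn0 := ler0n rat n.
have hA0 : 0 <= A by apply: divr_ge0; lra.
have hA3 : A <= 3.
  rewrite (ler_pdivrMr _ _ hn4); lra.
have -> : f n s - f n p = A * (p - s) / (s * p).
  by rewrite /f /A; field; rewrite hs0 hp0 (lt0r_neq0 hn4).
have hsp : 0 < s * p by apply: mulr_gt0; lra.
rewrite normrM normfV normrM (ger0_norm hA0) (gtr0_norm hsp) distrC.
rewrite (ler_pdivrMr _ _ hsp).
have hd : 0 <= `|s - p| by [].
have h1 : 551/100 <= s * p by nra.
nra.
Qed.

Lemma bern_up (a : rat) m : 0 <= a -> 2 * m%:R * a <= 1 -> (1 + a) ^+ m <= 1 + 2 * m%:R * a.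
Proof.
move=> ha; elim: m => [|m IH] hm; first by rewrite expr0 mulr0 mul0r addr0.
have hm' : 2 * m%:R * a <= 1.
  apply: le_trans hm; rewrite ler_wpM2r // ler_wpM2l // ler_nat; lia.
have := IH hm'; rewrite exprS -natr1 => h.
have h0 : 0 <= 1 + a by lra.
have h1 : (1 + a) * (1 + a) ^+ m <= (1 + a) * (1 + 2 * m%:R * a) by rewrite ler_wpM2l.
rewrite -natr1 in hm.
nra.
Qed.

Lemma xn_ratio n m : (8 * m <= n)%N -> (0 < n)%N -> xn n ^+ m <= 5/4 * xn n.+1 ^+ m.
Proof.
move=> hm hn.
have e : xn n = xn n.+1 * (1 + xn n).
  rewrite xnS_eq // -mulrA mulVf ?mulr1 //.
  by rewrite gt_eqF // ltr_pwDl // xn_ge0.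
have hx := xn_ge0 n.
have hmx : 2 * m%:R * xn n <= 1/4.
  have hN : (8 * m)%:R <= n%:R :> rat by rewrite ler_nat.
  have h := ler_wpM2r hx hN; rewrite xn_mul // natrM in h.
  nra.
have hb := bern_up (m := m) hx ltac:(lra).
rewrite {1}e exprMn mulrC.
apply: ler_wpM2r; first by rewrite exprn_ge0 ?xn_ge0.
lra.
Qed.



Lemma contract_step (a b B D X Y : rat) : 0 <= D -> 8 * D <= B -> 0 <= X -> 0 <= Y ->
  X <= 5/4 * Y -> a <= 2/3 * b + D * X -> b <= B * X -> a <= B * Y.
Proof.
move=> hD hB hX hY h1 h2 h3.
have h23 : (0:rat) < 2/3 by lra.
have h4 : 2/3 * b <= 2/3 * (B * X) by rewrite (ler_pM2l h23).
have h0 : 0 <= 2/3 * B + D by lra.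
have h5 := ler_wpM2l h0 h1.
have h6 : 0 <= (B / 6 - 5/4 * D) * Y by apply: mulr_ge0 => //; lra.
nra.
Qed.

Lemma contract (e : nat -> rat) m D N : 0 <= D ->
  (forall n, (N <= n)%N -> `|e n.+1| <= 2/3 * `|e n| + D * xn n ^+ m) ->
  exists B N', 0 <= B /\ (0 < N')%N /\ forall n, (N' <= n)%N -> `|e n| <= B * xn n ^+ m.
Proof.
move=> hD H.
set N1 := (maxn N (8 * m)).+1.
exists (8 * D + `|e N1| * N1%:R ^+ m), N1.
split; first by rewrite addr_ge0 ?mulr_ge0 ?exprn_ge0 ?ler0n.
split; first by [].
suff : forall i, `|e (N1 + i)%N| <= (8 * D + `|e N1| * N1%:R ^+ m) * xn (N1 + i) ^+ m.
  move=> Hi n hn; have := Hi (n - N1)%N.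
  by rewrite subnKC.
elim => [|i IH].
  rewrite addn0 mulrDl.
  have -> : `|e N1| * N1%:R ^+ m * xn N1 ^+ m = `|e N1|.
    by rewrite -mulrA -exprMn xn_mul // expr1n mulr1.
  have : 0 <= 8 * D * xn N1 ^+ m by rewrite mulr_ge0 ?exprn_ge0 ?xn_ge0 ?mulr_ge0.
  lra.
set B := 8 * D + _ in IH *.
set n := (N1 + i)%N in IH *.
have hn : (N <= n)%N by rewrite /n /N1; lia.
have hn0 : (0 < n)%N by rewrite /n /N1; lia.
have h1 := H n hn.
have h2 := xn_ratio (n := n) (m := m) ltac:(rewrite /n /N1; lia) hn0.
rewrite addnS -/n.
have hB : 8 * D <= B by rewrite /B lerDl mulr_ge0 ?exprn_ge0 ?ler0n.
have hx0 : 0 <= xn n ^+ m by rewrite exprn_ge0 ?xn_ge0.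
have hx1 : 0 <= xn n.+1 ^+ m by rewrite exprn_ge0 ?xn_ge0.
exact: (contract_step hD hB hx0 hx1 h2 h1 IH).
Qed.

Lemma q_lb : exists N, forall n, (N <= n)%N -> 19/10 <= q n.
Proof.
exists 27%N => n hn.
case: n hn => [|k] hk; first by [].
rewrite q_rec /f.
have hk4 : 0 < k%:R + 4 :> rat by have := ler0n rat k; lra.
rewrite (ler_pdivlMr _ _ hk4).
have ht : 0 <= (3 * k%:R + 3) / q k.
  apply: divr_ge0; last exact: ltW (q_pos k).
  have := ler0n rat k; lra.
have hk' : 26%:R <= k%:R :> rat by rewrite ler_nat; lia.
lra.
Qed.

Lemma motz_from_resid (P : {poly rat}) m D N : P`_0 = 3 -> 0 <= D ->
  (forall n, (N <= n)%N -> `|P.[xn n.+1] - f n P.[xn n]| <= D * xn n ^+ m) ->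
  exists B N', 0 <= B /\ (0 < N')%N /\ forall n, (N' <= n)%N -> `|q n - P.[xn n]| <= B * xn n ^+ m.
Proof.
move=> h0 hD H.
have HP := Exp_poly P (Exp_x 0).
have he : (0:rat) < 1/10 by lra.
have [N2 [_ H2]] := Exp_close HP he.
have [N3 H3] := q_lb.
apply: (contract (N := maxn N (maxn N2 N3))) hD _ => n hn.
have hp : 29/10 <= P.[xn n].
  have := H2 n ltac:(lia); rewrite h0 => h.
  have := ler_norm (3 - P.[xn n]); rewrite distrC; lra.
have hq : 19/10 <= q n by apply: H3; lia.
have hr := H n ltac:(lia).
have hf := fdiff n hq hp.
rewrite q_rec.
have -> : f n (q n) - P.[xn n.+1] = (f n (q n) - f n P.[xn n]) - (P.[xn n.+1] - f n P.[xn n]) by ring.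
apply: le_trans (ler_normB _ _) _.
lra.
Qed.

Definition P1 : {poly rat} := (-9/2)%:P * 'X + 3%:P.

Lemma P1_coef0 : P1`_0 = 3. Proof. by rewrite /P1 poly_coef0. Qed.
Lemma P1_coef1 : P1`_1 = -9/2. Proof. by rewrite /P1 poly_coef1 coefC. Qed.

Lemma base_resid n : (3 <= n)%N ->
  `|P1.[xn n.+1] - f n P1.[xn n]| <= 35 * xn n ^+ 2.
Proof.
move=> hn.
rewrite /P1 !hornerMXaddC !hornerC /f /xn -(natr1 n).
have hN : 3 <= n%:R :> rat by rewrite (ler_nat rat 3 n).
move: (n%:R : rat) hN => N hN.
have h1 : N != 0 by apply: lt0r_neq0; lra.
have h2 : N + 1 != 0 by apply: lt0r_neq0; lra.
have h3 : 2 * N - 3 != 0 by apply: lt0r_neq0; lra.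
have h4 : N + 4 != 0 by apply: lt0r_neq0; lra.
have h5 : -9/2 * N^-1 + 3 != 0.
  have -> : -9/2 * N^-1 + 3 = (2 * N - 3) * (3 / (2 * N)) by field.
  by rewrite mulf_neq0 // mulf_neq0 // invr_eq0 mulf_neq0.
have hDen : 0 < 2 * (N + 1) * (2 * N - 3) * (N + 4).
  by apply: mulr_gt0; [apply: mulr_gt0; [apply: mulr_gt0|]|]; lra.
have -> : -9/2 * (N + 1)^-1 + 3 - (2 * N + 5 + (3 * N + 3) / (-9/2 * N^-1 + 3)) / (N + 4)
    = - ((69 * N - 66) / (2 * (N + 1) * (2 * N - 3) * (N + 4))).
  field; rewrite h1 h2 h3 h4 /=; apply: lt0r_neq0; lra.
rewrite normrN ger0_norm; last by apply: divr_ge0; lra.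
have -> : 35 * N^-1 ^+ 2 = (35 * (2 * (N + 1) * (2 * N - 3) * (N + 4)) / N ^+ 2) / (2 * (N + 1) * (2 * N - 3) * (N + 4)).
  by field; rewrite h1 h2 h3 h4.
have hDi : 0 < (2 * (N + 1) * (2 * N - 3) * (N + 4))^-1 by rewrite invr_gt0.
rewrite (ler_pM2r hDi).
have hN2 : 0 < N ^+ 2 by apply: exprn_gt0; lra.
rewrite (ler_pdivlMr _ _ hN2).
have h6 : 0 <= N ^+ 3 by rewrite exprn_ge0; lra.
rewrite !expr2.
nra.
Qed.

Lemma const_zero (c S : rat) N : (forall n, (N <= n)%N -> `|c| <= S * xn n) -> c = 0.
Proof.
move=> H; apply/eqP; apply/negPn/negP => hc.
have hc' : 0 < `|c| / 2 by rewrite divr_gt0 // normr_gt0.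
have [M [hM HM]] := xn_small S hc'.
have := H (maxn N M) (leq_maxl _ _).
have := HM (maxn N M) (leq_maxr _ _).
have : 0 < `|c| by rewrite normr_gt0.
lra.
Qed.

Lemma poly_low j : forall (R : {poly rat}) C N,
  (forall n, (N <= n)%N -> `|R.[xn n]| <= C * xn n ^+ j) -> exists R', R = R' * 'X^j.
Proof.
elim: j => [|j IH] R C N H; first by exists R; rewrite expr0 mulr1.
move: H; elim/poly_ind: R => [|Q c _] H; first by exists 0; rewrite mul0r.
have [BQ [hBQ HQ]] := poly_bound Q.
have hc : c = 0.
  apply: (const_zero (S := `|C| + BQ) (N := maxn N 1)) => n hn.
  have hn0 : (0 < n)%N by lia.
  have hx0 := xn_gt0 hn0.
  have hx1 : `|xn n| <= 1 by rewrite ger0_norm ?xn_le1 // ltW.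
  have h1 := H n ltac:(lia).
  rewrite hornerMXaddC in h1.
  have h2 := HQ _ hx1.
  have h3 : xn n ^+ j.+1 <= xn n by rewrite -{2}(expr1 (xn n)); apply: xn_pow_le.
  have h4 : C * xn n ^+ j.+1 <= `|C| * xn n.
    apply: le_trans (ler_norm _) _; rewrite normrM (ger0_norm (exprn_ge0 _ (ltW hx0))).
    by apply: ler_wpM2l.
  have h5 : `|Q.[xn n] * xn n| <= BQ * xn n.
    by rewrite normrM (gtr0_norm hx0) ler_wpM2r // ltW.
  have := ler_normB (Q.[xn n] * xn n + c) (Q.[xn n] * xn n).
  rewrite addrC addKr.
  lra.
subst c; rewrite addr0 in H *.
have [R' ->] : exists R', Q = R' * 'X^j.
  apply: (IH Q C (maxn N 1)) => n hn.
  have hn0 : (0 < n)%N by lia.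
  have hx0 := xn_gt0 hn0.
  have h1 := H n ltac:(lia).
  rewrite hornerMX normrM (gtr0_norm hx0) exprSr mulrA in h1.
  by rewrite -(ler_pM2r hx0).
by exists R'; rewrite exprS (mulrC 'X) mulrA.
Qed.

Lemma pow_diff n m : (0 < n)%N ->
  0 <= xn n ^+ m - xn n.+1 ^+ m <= m%:R * xn n ^+ m.+1.
Proof.
move=> hn.
have hx := xn_gt0 hn.
have hy := xn_gt0 (ltn0Sn n).
have hyx := xnS hn.
have hd : xn n - xn n.+1 = xn n * xn n.+1.
  rewrite /xn -(natr1 n).
  have h1 : n%:R != 0 :> rat by rewrite pnatr_eq0 -lt0n.
  have h2 : n%:R + 1 != 0 :> rat by rewrite natr1 pnatr_eq0.
  by field; rewrite h1 h2.
elim: m => [|m /andP [IH1 IH2]].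
  by rewrite !expr0 subrr mul0r lexx.
have hym : xn n.+1 ^+ m <= xn n ^+ m by apply: xn_powS.
have hy0 : 0 <= xn n.+1 ^+ m by apply: exprn_ge0; apply: ltW.
have e : xn n ^+ m.+1 - xn n.+1 ^+ m.+1 = xn n * (xn n ^+ m - xn n.+1 ^+ m) + xn n.+1 ^+ m * (xn n * xn n.+1).
  by rewrite -hd !exprS; ring.
rewrite e; apply/andP; split.
  by apply: addr_ge0; apply: mulr_ge0 => //; [exact: ltW | apply: mulr_ge0; exact: ltW].
have h1 : xn n * (xn n ^+ m - xn n.+1 ^+ m) <= xn n * (m%:R * xn n ^+ m.+1).
  by rewrite ler_pM2l.
have h2 : xn n.+1 ^+ m * (xn n * xn n.+1) <= xn n ^+ m * (xn n * xn n).
  apply: ler_pM => //; first by rewrite mulr_ge0 // ltW.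
  by rewrite ler_pM2l.
have -> : m.+1%:R * xn n ^+ m.+2 = xn n * (m%:R * xn n ^+ m.+1) + xn n ^+ m * (xn n * xn n).
  by rewrite -(natr1 m) !exprS; ring.
exact: lerD.
Qed.

Lemma f_x n t : (0 < n)%N -> t != 0 ->
  f n t = (2 + 5 * xn n + (3 + 3 * xn n) * t^-1) * (1 + 4 * xn n)^-1.
Proof.
move=> hn ht; rewrite /f /xn.
have h1 : n%:R != 0 :> rat by rewrite pnatr_eq0 -lt0n.
have hn0 := ler0n rat n.
have h2 : n%:R + 4 != 0 :> rat by apply: lt0r_neq0; lra.
have h3 : 1 + 4 * n%:R^-1 != 0 :> rat.
  apply: lt0r_neq0; have : 0 <= n%:R^-1 :> rat by rewrite invr_ge0.
  lra.
by field; rewrite h1 h2 ht.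
Qed.

Ltac clear_all := repeat match goal with H : _ |- _ => clear H end.

Lemma add3_le (a b c' u v w : rat) : a <= u -> b <= v -> c' <= w -> a + b + c' <= u + v + w.
Proof. by move=> h1 h2 h3; apply: lerD => //; apply: lerD. Qed.

Lemma xnp_ge0 n m : 0 <= xn n ^+ m.
Proof. exact: exprn_ge0 (xn_ge0 n). Qed.
Lemma Bxn_ge0 B n m : 0 <= B -> 0 <= B * xn n ^+ m.
Proof. move=> h; exact: mulr_ge0 h (xnp_ge0 n m). Qed.
Lemma xn_norm n : (0 < n)%N -> `|xn n| <= 1.
Proof. by move=> h; rewrite ger0_norm ?xn_le1 ?xn_ge0. Qed.
Lemma Cxn_le C n k m : 0 <= C -> (0 < n)%N -> (k <= m)%N -> C * xn n ^+ m <= C * xn n ^+ k.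
Proof. by move=> hC hn hk; apply: ler_wpM2l => //; apply: xn_pow_le. Qed.
Lemma CxnS C n m : 0 <= C -> (0 < n)%N -> C * xn n.+1 ^+ m <= C * xn n ^+ m.
Proof. by move=> hC hn; apply: ler_wpM2l => //; apply: xn_powS. Qed.
Lemma coef_addXn (P : {poly rat}) c m i : (i < m)%N -> (P + c%:P * 'X^m)`_i = P`_i.
Proof. by move=> h; rewrite coefD coefMXn h addr0. Qed.
Lemma ge_of_close (u c e : rat) : `|u - c| <= e -> c - e <= u.
Proof. by move=> h; have := ler_norm (c - u); rewrite distrC; lra. Qed.

Lemma step_exp (P : {poly rat}) m B N : (2 <= m)%N -> P`_0 = 3 -> P`_1 = -9/2 -> 0 <= B ->
  (forall n, (N <= n)%N -> `|q n - P.[xn n]| <= B * xn n ^+ m) ->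
  exists P' : {poly rat}, P'`_0 = 3 /\ P'`_1 = -9/2 /\ exists B' N', 0 <= B' /\ (0 < N')%N /\
    forall n, (N' <= n)%N -> `|q n - P'.[xn n]| <= B' * xn n ^+ m.+1.
Proof.
move=> hm h0 h1 hB H.
have HPx := Exp_poly P (Exp_x m).
have he : (0:rat) < 1/10 by lra.
have [N2 [hN2 H2]] := Exp_close HPx he.
have [N3 H3] := q_lb.
have pge : forall n, (N2 <= n)%N -> 29/10 <= P.[xn n].
  move=> n hn; have := ge_of_close (H2 n hn); rewrite h0; clear_all; intros; lra.
have Hres1 : forall n, (maxn 1 (maxn N (maxn N2 N3)) <= n)%N ->
    `|P.[xn n.+1] - f n P.[xn n]| <= 2 * (B * xn n ^+ m).
  move=> n hn.
  have hn0 : (0 < n)%N by clear -hn; lia.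
  have hf := fdiff n (H3 n ltac:(clear -hn; lia)) (pge n ltac:(clear -hn; lia)).
  have e1 := H n ltac:(clear -hn; lia).
  have e2 := H n.+1 ltac:(clear -hn; lia).
  rewrite q_rec in e2.
  have e3 := CxnS m hB hn0.
  have -> : P.[xn n.+1] - f n P.[xn n] = (f n (q n) - f n P.[xn n]) - (f n (q n) - P.[xn n.+1]) by ring.
  apply: le_trans (ler_normB _ _) _.
  have y0 := Bxn_ge0 n m hB.
  have h23 : (0:rat) <= 2/3 by clear_all; lra.
  apply: le_trans (lerD (le_trans hf (ler_wpM2l h23 e1)) (le_trans e2 e3)) _.
  move: y0; move: (B * xn n ^+ m) => y; clear_all; intros; lra.
have hP0 : P`_0 != 0 by rewrite h0.
have Hinvp := Exp_inv HPx hP0.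
have h140 : (1 : rat) + 4 * 0 != 0 by rewrite mulr0 addr0 oner_eq0.
have H14 := Exp_inv (Exp_add (Exp_const m 1) (Exp_mul (Exp_const m 4) (Exp_x m))) h140.
have Hnum := Exp_add (Exp_add (Exp_const m 2) (Exp_mul (Exp_const m 5) (Exp_x m)))
   (Exp_mul (Exp_add (Exp_const m 3) (Exp_mul (Exp_const m 3) (Exp_x m))) Hinvp).
have Hres := Exp_add (Exp_shift HPx) (Exp_mul (Exp_const m (-1)) (Exp_mul Hnum H14)).
have Hres' : exists r0 r1, Exp m (fun n => P.[xn n.+1] - f n P.[xn n]) r0 r1.
  do 2 eexists; apply: Exp_eq Hres _.
  exists (maxn N2 1) => n hn.
  have hn0 : (0 < n)%N by clear -hn; lia.
  have hp : P.[xn n] != 0 by apply: lt0r_neq0; have := pge n ltac:(clear -hn; lia); clear_all; intros; lra.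
  rewrite (f_x hn0 hp); ring.
move: Hres' => [r0 [r1 [R [_ [_ [C [N4 [hC [hN4 HR]]]]]]]]].
have [R' eR] : exists R', R = R' * 'X^m.
  apply: (poly_low (C := 2 * B + C) (N := maxn 1 (maxn N4 (maxn N (maxn N2 N3))))) => n hn.
  have hn0 : (0 < n)%N by clear -hn; lia.
  have a1 := HR n ltac:(clear -hn; lia).
  have a2 := Hres1 n ltac:(clear -hn; lia).
  have a3 := Cxn_le hC hn0 (leqnSn m).
  move: (P.[xn n.+1] - f n P.[xn n]) a1 a2 => rs a1 a2.
  have := ler_normB rs (rs - R.[xn n]); rewrite opprB addrC subrK => a4.
  rewrite mulrDl -mulrA.
  move: a1 a2 a3 a4; clear_all; intros; lra.
have [S [hS HS]] := poly_near0 R'.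
move: (R'`_0) HS => r HS.
have Hres2 : forall n, (maxn N4 1 <= n)%N ->
    `|(P.[xn n.+1] - f n P.[xn n]) - r * xn n ^+ m| <= (C + S) * xn n ^+ m.+1.
  move=> n hn.
  have hn0 : (0 < n)%N by clear -hn; lia.
  have hx0 := xn_gt0 hn0.
  have a1 := HR n ltac:(clear -hn; lia).
  rewrite eR hornerM hornerXn in a1.
  have a2 := HS _ (xn_norm hn0); rewrite (gtr0_norm hx0) in a2.
  have hxm : 0 < xn n ^+ m by apply: exprn_gt0.
  have a3 : `|(R'.[xn n] - r) * xn n ^+ m| <= S * xn n ^+ m.+1.
    by rewrite normrM (gtr0_norm hxm) exprS mulrA (ler_pM2r hxm).
  move: (P.[xn n.+1] - f n P.[xn n]) a1 => rs a1.
  have -> : rs - r * xn n ^+ m = (rs - R'.[xn n] * xn n ^+ m) + (R'.[xn n] - r) * xn n ^+ m by ring.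
  apply: le_trans (ler_normD _ _) _.
  rewrite [(C + S) * _]mulrDl.
  move: a1 a2 a3; clear_all; intros; lra.
have [c hc] : exists c : rat, c = -3/4 * r by eexists.
pose P' := P + c%:P * 'X^m.
have hP'x : forall x, P'.[x] = P.[x] + c * x ^+ m.
  by move=> x; rewrite /P' hornerD hornerCM hornerXn.
have hP'0 : P'`_0 = 3 by rewrite /P' coef_addXn; [exact: h0 | clear -hm; lia].
have hP'1 : P'`_1 = -9/2 by rewrite /P' coef_addXn; [exact: h1 | clear -hm; lia].
have HP'x := Exp_poly P' (Exp_x m).
have hP'0' : P'`_0 != 0 by rewrite hP'0.
have Hinvp' := Exp_inv HP'x hP'0'.
have Hg := Exp_mul (Exp_mul (Exp_mul (Exp_add (Exp_const m 3) (Exp_mul (Exp_const m 3) (Exp_x m))) H14) Hinvp) Hinvp'.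
have Hg1 : exists d, Exp m (fun n => (3 + 3 * xn n) * (1 + 4 * xn n)^-1 * (P.[xn n])^-1 * (P'.[xn n])^-1) (1/3) d.
  eexists; apply: Exp_coef Hg _ erefl.
  by rewrite h0 hP'0; field.
move: Hg1 => [d Hg1].
have [S2 [N5 [hS2 [hN5 HS2]]]] := Exp_near0 Hg1.
have [N6 [hN6 H6]] := Exp_close HP'x he.
have p'ge : forall n, (N6 <= n)%N -> 29/10 <= P'.[xn n].
  move=> n hn; have := ge_of_close (H6 n hn); rewrite hP'0; clear_all; intros; lra.
have [D' hD'e] : exists D' : rat, D' = C + S + `|c| * m%:R + `|c| * S2 by eexists.
have hD' : 0 <= D'.
  have t1 := mulr_ge0 (normr_ge0 c) (ler0n rat m).
  have t2 := mulr_ge0 (normr_ge0 c) hS2.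
  rewrite hD'e; apply: addr_ge0; [apply: addr_ge0; [exact: addr_ge0 hC hS | exact: t1] | exact: t2].
have Hres' : forall n, (maxn (maxn N4 1) (maxn N2 (maxn N5 N6)) <= n)%N ->
    `|P'.[xn n.+1] - f n P'.[xn n]| <= D' * xn n ^+ m.+1.
  move=> n hn.
  have hn0 : (0 < n)%N by clear -hn; lia.
  have hx0 := xn_gt0 hn0.
  have hp1 := pge n ltac:(clear -hn; lia).
  have hp2 := p'ge n ltac:(clear -hn; lia).
  have a1 := Hres2 n ltac:(clear -hn; lia).
  have a2 := HS2 n ltac:(clear -hn; lia).
  have /andP [a3 a4] := pow_diff m hn0.
  have hpn : P.[xn n] != 0 by apply: lt0r_neq0; move: hp1; clear_all; intros; lra.
  have hpn' : P'.[xn n] != 0 by apply: lt0r_neq0; move: hp2; clear_all; intros; lra.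
  have h14 : 1 + 4 * xn n != 0 by apply: lt0r_neq0; move: hx0; clear_all; intros; lra.
  set g := _ * _ * _ * _ in a2.
  have E : P'.[xn n.+1] - f n P'.[xn n] =
      ((P.[xn n.+1] - f n P.[xn n]) - r * xn n ^+ m) - c * (xn n ^+ m - xn n.+1 ^+ m) + c * xn n ^+ m * (g - 1/3).
    rewrite /g (f_x hn0 hpn) (f_x hn0 hpn') !hP'x hc.
    rewrite hP'x in hpn'.
    have e4 : P.[xn n] * 4 + -3 * r * xn n ^+ m = 4 * (P.[xn n] + c * xn n ^+ m) by rewrite hc; field.
    have h4 : (4 : rat) != 0 by [].
    by field; rewrite e4 hpn (mulf_neq0 h4 hpn') h14.
  rewrite E.
  have b1 : `|c * (xn n ^+ m - xn n.+1 ^+ m)| <= `|c| * (m%:R * xn n ^+ m.+1).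
    by rewrite normrM (ger0_norm a3); apply: ler_wpM2l.
  have hxm := xnp_ge0 n m.
  have b2 : `|c * xn n ^+ m * (g - 1/3)| <= `|c| * S2 * xn n ^+ m.+1.
    rewrite normrM normrM (ger0_norm hxm) exprS.
    have -> : `|c| * S2 * (xn n * xn n ^+ m) = `|c| * xn n ^+ m * (S2 * xn n) by ring.
    by apply: ler_wpM2l; [apply: mulr_ge0 | exact: a2].
  apply: le_trans (ler_normD _ _) _.
  apply: le_trans (lerD (ler_normB _ _) (lexx _)) _.
  have eD : D' * xn n ^+ m.+1 = (C + S) * xn n ^+ m.+1 + `|c| * (m%:R * xn n ^+ m.+1) + `|c| * S2 * xn n ^+ m.+1.
    by rewrite hD'e; ring.
  rewrite eD; exact: add3_le a1 b1 b2.
have [B' [N' [hB' [hN' HB']]]] := motz_from_resid hP'0 hD' Hres'.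
exists P'; split; first exact: hP'0.
split; first exact: hP'1.
exists B', N'; split; first exact: hB'.
split; first exact: hN'.
exact: HB'.
Qed.


Lemma motz_bounds j : exists P : {poly rat}, P`_0 = 3 /\ P`_1 = -9/2 /\
  exists B N, 0 <= B /\ (0 < N)%N /\
    forall n, (N <= n)%N -> `|q n - P.[xn n]| <= B * xn n ^+ j.+2.
Proof.
elim: j => [|j [P [h0 [h1 [B [N [hB [hN H]]]]]]]].
  have hD : (0:rat) <= 35 by [].
  have [B [N [hB [hN H]]]] := motz_from_resid (m := 2) (N := 3) P1_coef0 hD base_resid.
  exists P1; split; first exact: P1_coef0.
  split; first exact: P1_coef1.
  by exists B, N.
exact: (step_exp (m := j.+2) (B := B) (N := N) isT h0 h1 hB H).
Qed.

Lemma motz_exp K : Exp K q 3 (-9/2).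
Proof.
have [P [h0 [h1 [B [N [hB [hN H]]]]]]] := motz_bounds K.
apply: (Exp_mono (K := K.+1)); first exact: leqnSn.
exists P; split; first exact: h0.
split; first exact: h1.
by exists B, N.
Qed.

Lemma motz_Iinv K : Iinv K motzkin.
Proof.
exists 3, (-9/2); split; first by [].
split; first by [].
split; first by exists 0%N => n _; exact: motz_pos.
exact: motz_exp K.
Qed.

Theorem mainTheorem4 : forall r : nat, (0 < r)%N -> asympt_r_log_convex r motzkin.
Proof.
move=> r _.
have [N HN] := many (k := r) (K := (2 * r)%N) (leqnn _) (motz_Iinv _).
exists N => k n /andP [_ hk] hn.
exact: ltW (HN k n hk hn).
Qed.
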